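(* Assume CH. There exists a Sierpiński set $S\subseteq\mathbb{R}$ such that $S+S=\{a+b:a,b\in S\}$ is a Bernstein set.
   Context: A Sierpiński set is $S\subseteq\mathbb{R}$ with $|S|=\mathfrak{c}$ such that $S\cap N$ is countable for every Lebesgue-null $N\subseteq\mathbb{R}$. A set $B\subseteq\mathbb{R}$ is a Bernstein set if for every nonempty perfect set $P\subseteq\mathbb{R}$ both $B\cap P\neq\emptyset$ and $(\mathbb{R}\setminus B)\cap P\neq\emptyset$. *)

(* Defs.v *)
From Stdlib Require Import Reals.
Open Scope R_scope.

Definition countable (A : R -> Prop) : Prop :=
  exists f : R -> nat, forall x y, A x -> A y -> f x = f y -> x = y.

Definition has_card_continuum (A : R -> Prop) : Prop :=
  exists f : R -> R,
    (forall x, A (f x)) /\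
    (forall x y, f x = f y -> x = y) /\
    (forall y, A y -> exists x, f x = y).

Definition CH : Prop :=
  forall A : R -> Prop, countable A \/ has_card_continuum A.

Definition lebesgue_null (N : R -> Prop) : Prop :=
  forall eps : R, 0 < eps ->
    exists a b : nat -> R,
      (forall n, a n <= b n) /\
      (forall x, N x -> exists n, a n < x < b n) /\
      (forall m, sum_f_R0 (fun n => b n - a n) m <= eps).

Definition sierpinski_set (S : R -> Prop) : Prop :=
  has_card_continuum S /\
  forall N : R -> Prop, lebesgue_null N -> countable (fun x => S x /\ N x).

Definition closed_set (P : R -> Prop) : Prop :=
  forall x, (forall e, 0 < e -> exists y, P y /\ Rabs (y - x) < e) -> P x.

Definition perfect_set (P : R -> Prop) : Prop :=
  closed_set P /\
  forall x, P x -> forall e, 0 < e -> exists y, P y /\ y <> x /\ Rabs (y - x) < e.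

Definition bernstein_set (B : R -> Prop) : Prop :=
  forall P : R -> Prop, perfect_set P -> (exists x, P x) ->
    (exists x, P x /\ B x) /\ (exists x, P x /\ ~ B x).

Definition sumset (S : R -> Prop) : R -> Prop :=
  fun z => exists a b, S a /\ S b /\ z = a + b.

(* Main.v *)
Require Import Defs.
From Stdlib Require Import Reals Lra Lia ZArith Classical ClassicalEpsilon FunctionalExtensionality PropExtensionality.
From Stdlib Require Import Inverse_Image.
From Stdlib Require Cantor.
Require Import Defs.
From mathcomp Require all_boot all_order all_algebra all_classical all_reals all_analysis.
From mathcomp Require Rstruct Rstruct_topology wochoice.

Module MC.
Import all_boot all_order all_algebra all_classical all_reals all_analysis.
Import Rstruct Rstruct_topology wochoice.
Import Order.TTheory GRing.Theory Num.Theory.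
Local Open Scope classical_set_scope.

Lemma sum_conv (f : nat -> R) (m : nat) :
  (\sum_(0 <= k < m.+1) f k)%R = sum_f_R0 f m.
Proof.
elim: m => [|m IH]; first by rewrite big_nat1.
by rewrite big_nat_recr //= IH RplusE.
Qed.

Lemma series_le (f : nat -> R) (e : R) :
  (forall n, (0 <= f n)%R) -> (forall m, (sum_f_R0 f m <= e)%coqR) ->
  (\sum_(0 <= n <oo) (f n)%:E <= e%:E)%E.
Proof.
move=> f0 fe.
apply: lime_le; first by apply: is_cvg_nneseries => n _; rewrite lee_fin.
apply: nearW => n.
rewrite sumEFin lee_fin.
case: n => [|m].
  rewrite big_geq //; apply/RleP; move: (fe 0%N) (f0 0%N) => /= h /RleP h2.
  change (IZR Z0 <= e)%coqR. change (IZR Z0 <= f 0%N)%coqR in h2. lra.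
by rewrite sum_conv; apply/RleP.
Qed.

Definition small (N : set R) : Prop := (@lebesgue_measure R).-negligible N.

Lemma itv_meas (a b : R) : (a <= b)%coqR ->
  (lebesgue_measure (`]a, b[%classic : set R) <= (b - a)%:E)%E.
Proof.
move=> ab; rewrite lebesgue_measure_itv /=.
case: ifP => _; first by rewrite EFinB.
by rewrite lee_fin subr_ge0; apply/RleP.
Qed.

Lemma cover_meas (a b : nat -> R) (e : R) :
  (forall n, (a n <= b n)%coqR) ->
  (forall m, (sum_f_R0 (fun n => b n - a n) m <= e)%coqR) ->
  (lebesgue_measure (\bigcup_n (`]a n, b n[%classic : set R)) <= e%:E)%E.
Proof.
move=> ab se.
have := @measure_sigma_subadditive _ _ _ (@lebesgue_measure R) (\bigcup_n (`]a n, b n[%classic : set R)) (fun n => (`]a n, b n[%classic : set R)) (fun n => measurable_itv _) (bigcupT_measurable _ (fun n => measurable_itv _)) (@subset_refl _ _).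
move=> h; apply: (le_trans h).
apply: (le_trans (lee_nneseries (v := fun n => (b n - a n)%:E) _ _)).
- by move=> i _ _; apply: measure_ge0.
- by move=> n _; apply: itv_meas.
apply: series_le => //.
move=> n; rewrite subr_ge0; apply/RleP; apply: ab.
Qed.

Lemma small_null (N : R -> Prop) : lebesgue_null N -> small N.
Proof.
move=> hN.
have hk : forall k : nat, exists ab : (nat -> R) * (nat -> R),
   (forall n, (ab.1 n <= ab.2 n)%coqR) /\
   (forall x, N x -> exists n, (ab.1 n < x < ab.2 n)%coqR) /\
   (forall m, (sum_f_R0 (fun n => ab.2 n - ab.1 n) m <= / INR k.+1)%coqR).
  move=> k; have := hN (/ INR k.+1)%coqR.
  case. apply: Rinv_0_lt_compat; apply: lt_0_INR; apply/ssrnat.ltP => //.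
  by move=> a [b h]; exists (a, b).
case: (choice hk) => ab hab.
exists (\bigcap_k \bigcup_n (`](ab k).1 n, (ab k).2 n[%classic : set R)).
split.
- apply: bigcapT_measurable => k; apply: bigcupT_measurable => n; apply: measurable_itv.
- apply/eqP; rewrite eq_le measure_ge0 andbT.
  apply/lee_addgt0Pr => e e0; rewrite add0e.
  have e0' : (0 < e)%coqR by apply/RltP.
  have [k hk2] : exists k : nat, (/ INR k.+1 < e)%coqR.
    have [h1 _] := archimed (/ e)%coqR.
    exists (Z.to_nat (up (/ e)%coqR)).
    rewrite S_INR INR_IZR_INZ Z2Nat.id.
    + rewrite -[X in (_ < X)%coqR](Rinv_inv e); apply: Rinv_lt_contravar.
      * apply: Rmult_lt_0_compat; first exact: Rinv_0_lt_compat.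
        have : (0 < / e)%coqR by apply: Rinv_0_lt_compat.
        lra.
      * lra.
    + apply: le_IZR; have : (0 < / e)%coqR by apply: Rinv_0_lt_compat. lra.
  apply: (@le_trans _ _ (lebesgue_measure (\bigcup_n (`](ab k).1 n, (ab k).2 n[%classic : set R)))).
  apply: le_measure.
  + rewrite inE; apply: bigcapT_measurable => k'; apply: bigcupT_measurable => n; apply: measurable_itv.
  + rewrite inE; apply: bigcupT_measurable => n; apply: measurable_itv.
  + by move=> x hx; apply: hx.
  apply: (le_trans (cover_meas _ _ _ (proj1 (hab k)) (proj2 (proj2 (hab k))))).
  by rewrite lee_fin; apply/RleP; lra.
- move=> x Nx k _.
  have [n hn] := proj1 (proj2 (hab k)) x Nx.
  exists n => //=; rewrite in_itv /=; apply/andP; split; apply/RltP; lra.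
Qed.

Lemma small_sub (N M : R -> Prop) : (forall x, N x -> M x) -> small M -> small N.
Proof. by move=> h; apply: negligibleS. Qed.

Lemma small_cup (F : nat -> R -> Prop) : (forall n, small (F n)) ->
  small (fun x => exists n, F n x).
Proof.
move=> h; have := negligible_bigcup h.
by apply: negligibleS => x [n hn]; exists n.
Qed.

Lemma small_U (N M : R -> Prop) : small N -> small M -> small (fun x => N x \/ M x).
Proof.
move=> hN hM; have := negligibleU hN hM.
by apply: negligibleS => x [h|h]; [left|right].
Qed.

Lemma small_1 (a : R) : small (fun x => x = a).
Proof.
exists [set a]; split; last by move=> x ->.
  exact: measurable_set1.
exact: (@lebesgue_measure_set1 R a).
Qed.

Lemma small_not_all (N : R -> Prop) : small N -> exists x, ~ N x.
Proof.
move=> [A [mA A0 NA]].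
apply: contrapT => hn.
have hall : forall x, A x.
  by move=> x; apply: NA; apply: contrapT => h; apply: hn; exists x.
have : (lebesgue_measure (`[0%R, 1%R]%classic : set R) <= lebesgue_measure A)%E.
  apply: le_measure; rewrite ?inE //.
rewrite A0 lebesgue_measure_itv /= lte_fin ltr01 oppr0 adde0 lee_fin ler10. done.
Qed.


Lemma wo_R : exists lt : R -> R -> Prop, well_founded lt /\
  (forall x y, x <> y -> lt x y \/ lt y x) /\
  (forall x y z, lt x y -> lt y z -> lt x z).
Proof.
case: (well_ordering_principle R) => Rel hwo.
have refl : forall x, Rel x x.
  move=> x; have [z [[zA zlb] _]] := hwo (pred1 x) (ex_intro _ x (eqxx x)).
  by move: zA; rewrite inE => /eqP ez; subst z; apply: zlb; rewrite inE.
have anti : forall x y, Rel x y -> Rel y x -> x = y.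
  move=> x y hxy hyx.
  have [z [_ zu]] := hwo [pred t | (t == x) || (t == y)] (ex_intro _ x (introT orP (or_introl (eqxx x)))).
  have ex : minimum_of Rel [pred t | (t == x) || (t == y)] x.
    split; first by rewrite inE eqxx.
    by move=> t; rewrite inE => /orP [] /eqP ->.
  have ey : minimum_of Rel [pred t | (t == x) || (t == y)] y.
    split; first by rewrite inE eqxx orbT.
    by move=> t; rewrite inE => /orP [] /eqP ->.
  by rewrite -(zu _ ex) (zu _ ey).
have trans : forall x y z, Rel x y -> Rel y z -> Rel x z.
  move=> x y z hxy hyz.
  have [m [[mA mlb] _]] := hwo [pred t | [|| t == x, t == y | t == z]] (ex_intro _ x (introT or3P (Or31 _ _ (eqxx x)))).
  move: mA; rewrite inE => /or3P [] /eqP em; subst m.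
  + by apply: mlb; rewrite inE eqxx !orbT.
  + by rewrite (anti x y hxy (mlb x _)) // inE eqxx.
  + have e : y = z by apply: (anti y z hyz (mlb y _)); rewrite inE eqxx orbT.
    by rewrite -e.
exists (fun x y => Rel x y /\ x <> y); split; [|split].
- move=> a; apply: contrapT => na.
  have [z [[zA zlb] _]] := hwo [pred t | `[< ~ Acc (fun x y => Rel x y /\ x <> y) t >] ] (ex_intro _ a (introT (asboolP _) na)).
  move: zA; rewrite inE => hz; apply: hz.
  constructor => y [Ryz ne]; apply: contrapT => ny.
  apply: ne; apply: anti => //; apply: zlb; rewrite inE; first [exact: ny | apply/asboolP; exact: ny].
- move=> x y ne.
  have [z [[zA zlb] _]] := hwo [pred t | (t == x) || (t == y)] (ex_intro _ x (introT orP (or_introl (eqxx x)))).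
  move: zA; rewrite inE => /orP [] /eqP ez; subst z.
  + by left; split => //; apply: zlb; rewrite inE eqxx orbT.
  + by right; split => //; [apply: zlb; rewrite inE eqxx | move=> h; apply: ne].
- move=> x y z [hxy nxy] [hyz nyz]; split; first exact: trans hxy hyz.
  move=> exz; subst z; apply: nxy; exact: anti.
Qed.

End MC.

Open Scope R_scope.
Notation small := MC.small.

Definition cov (A : R -> Prop) : Prop :=
  exists g : nat -> R, forall x, A x -> exists n, g n = x.

Lemma countable_cov A : countable A -> cov A.
Proof.
  intros [f hf].
  exists (fun n => epsilon (inhabits 0) (fun x => A x /\ f x = n)).
  intros x Ax. exists (f x).
  assert (h : exists y, A y /\ f y = f x) by (exists x; auto).
  destruct (epsilon_spec (inhabits 0) _ h) as [h1 h2].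
  apply hf; auto.
Qed.

Lemma cov_countable A : cov A -> countable A.
Proof.
  intros [g hg].
  exists (fun x => epsilon (inhabits 0%nat) (fun n => g n = x)).
  intros x y Ax Ay e.
  destruct (epsilon_spec (inhabits 0%nat) _ (hg x Ax)) as [].
  destruct (epsilon_spec (inhabits 0%nat) _ (hg y Ay)) as [].
  rewrite <- e. reflexivity.
Qed.

Lemma cov_sub (A B : R -> Prop) : (forall x, A x -> B x) -> cov B -> cov A.
Proof. intros h [g hg]. exists g. intros x Ax. apply hg, h, Ax. Qed.

Lemma cov_bigunion (I : R -> Prop) (A : R -> R -> Prop) :
  cov I -> (forall s, I s -> cov (A s)) -> cov (fun z => exists s, I s /\ A s z).
Proof.
  intros [gI hI] hA.
  set (G := fun s => epsilon (inhabits (fun _ : nat => 0))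
              (fun g => forall x, A s x -> exists n, g n = x)).
  exists (fun m => let (i, j) := Cantor.of_nat m in G (gI i) j).
  intros z [s [Is Asz]].
  destruct (hI s Is) as [i hi].
  assert (hG := epsilon_spec (inhabits (fun _ : nat => 0))
              (fun g => forall x, A s x -> exists n, g n = x) (hA s Is)).
  fold (G s) in hG.
  destruct (hG z Asz) as [j hj].
  exists (Cantor.to_nat (i, j)). rewrite Cantor.cancel_of_to. rewrite hi. exact hj.
Qed.

Lemma cov_union (A B : R -> Prop) : cov A -> cov B -> cov (fun z => A z \/ B z).
Proof.
  intros [ga ha] [gb hb].
  exists (fun m => if Nat.even m then ga (Nat.div2 m) else gb (Nat.div2 m)).
  intros z [Az|Bz].
  - destruct (ha z Az) as [n hn]. exists (2 * n)%nat.
    replace (Nat.even (2 * n)) with true by (rewrite Nat.even_mul; reflexivity).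
    rewrite Nat.div2_double. exact hn.
  - destruct (hb z Bz) as [n hn]. exists (S (2 * n))%nat.
    replace (Nat.even (S (2 * n))) with false by (rewrite Nat.even_succ, Nat.odd_mul; reflexivity).
    rewrite Nat.div2_succ_double. exact hn.
Qed.

Lemma cov_1 (a : R) : cov (fun z => z = a).
Proof. exists (fun _ => a). intros x ->. exists 0%nat. reflexivity. Qed.

Lemma cov_image (A : R -> Prop) (h : R -> R) : cov A -> cov (fun z => exists a, A a /\ z = h a).
Proof.
  intros [g hg]. exists (fun n => h (g n)). intros z [a [Aa ->]].
  destruct (hg a Aa) as [n hn]. exists n. rewrite hn. reflexivity.
Qed.

Lemma cov_sum (A B : R -> Prop) : cov A -> cov B ->
  cov (fun z => exists a b, A a /\ B b /\ z = a + b).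
Proof.
  intros hA hB.
  apply cov_sub with (B := fun z => exists a, A a /\ (fun a z => exists b, B b /\ z = a + b) a z).
  { intros z [a [b [Aa [Bb e]]]]. exists a. split; auto. exists b. auto. }
  apply cov_bigunion; auto.
  intros a _. apply cov_image with (h := fun b => a + b). exact hB.
Qed.


Lemma null_reflect (N : R -> Prop) (p : R) : lebesgue_null N -> lebesgue_null (fun x => N (p - x)).
Proof.
  intros hN eps heps. destruct (hN eps heps) as [a [b [h1 [h2 h3]]]].
  exists (fun n => p - b n), (fun n => p - a n). split; [|split].
  - intros n. specialize (h1 n). lra.
  - intros x Nx. destruct (h2 _ Nx) as [n hn]. exists n. lra.
  - intros m. specialize (h3 m).
    replace (sum_f_R0 (fun n => p - a n - (p - b n)) m) with (sum_f_R0 (fun n => b n - a n) m); auto.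
    apply sum_eq. intros. ring.
Qed.

Lemma geom_sum (eps : R) (m : nat) :
  sum_f_R0 (fun n => eps / 2 ^ (S n)) m = eps - eps / 2 ^ (S m).
Proof.
  induction m.
  - simpl. field.
  - rewrite tech5, IHm. simpl. field. apply pow_nonzero. lra.
Qed.

Lemma cov_null (A : R -> Prop) : cov A -> lebesgue_null A.
Proof.
  intros [g hg] eps heps.
  exists (fun n => g n - eps / 2 ^ (S (S n))), (fun n => g n + eps / 2 ^ (S (S n))).
  assert (hp : forall n, 0 < eps / 2 ^ n).
  { intros n. apply Rdiv_lt_0_compat; auto. apply pow_lt. lra. }
  split; [|split].
  - intros n. specialize (hp (S (S n))). lra.
  - intros x Ax. destruct (hg x Ax) as [n hn]. exists n. specialize (hp (S (S n))). lra.
  - intros m.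
    replace (sum_f_R0 _ m) with (sum_f_R0 (fun n => eps / 2 ^ (S n)) m).
    + rewrite geom_sum. specialize (hp (S m)). lra.
    + apply sum_eq. intros i _. simpl. field. apply pow_nonzero. lra.
Qed.

Lemma cov_small (A : R -> Prop) : cov A -> small A.
Proof. intros h. apply MC.small_null, cov_null, h. Qed.

Lemma small_bigunion (I : R -> Prop) (N : R -> R -> Prop) :
  cov I -> (forall s, I s -> small (N s)) -> small (fun z => exists s, I s /\ N s z).
Proof.
  intros [gI hI] hN.
  apply MC.small_sub with (M := fun z => exists n, (fun n z => I (gI n) /\ N (gI n) z) n z).
  { intros z [s [Is Nz]]. destruct (hI s Is) as [n hn]. exists n. subst s. auto. }
  apply MC.small_cup. intros n.
  destruct (classic (I (gI n))) as [h|h].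
  - apply MC.small_sub with (M := N (gI n)). { intros z [_ hz]; exact hz. }
    apply hN, h.
  - apply MC.small_sub with (M := fun z => z = 0). { intros z [h' _]. contradiction. }
    apply MC.small_1.
Qed.

Section Perf.
Variable P : R -> Prop.
Hypothesis hP : perfect_set P.
Variable x0 : R.
Hypothesis Px0 : P x0.
Variable g : nat -> R.

Definition pstep (x r : R) (n : nat) (p : R * R) : Prop :=
  P (fst p) /\ Rabs (fst p - x) <= r / 2 /\ 0 < snd p /\ snd p <= r / 2 /\ snd p < Rabs (fst p - g n).

Lemma pstep_ex x r n : P x -> 0 < r -> exists p, pstep x r n p.
Proof.
  intros Px hr. destruct hP as [_ hnp].
  destruct (hnp x Px (r / 2) ltac:(lra)) as [y [Py [yx hy]]].
  destruct (Req_dec x (g n)) as [e|ne].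
  - exists (y, Rmin (r / 2) (Rabs (y - g n) / 2)). unfold pstep; simpl.
    assert (0 < Rabs (y - g n)) by (apply Rabs_pos_lt; subst; lra).
    repeat split; auto; try lra.
    + apply Rmin_glb_lt; lra.
    + apply Rmin_l.
    + apply Rle_lt_trans with (Rabs (y - g n) / 2). apply Rmin_r. lra.
  - exists (x, Rmin (r / 2) (Rabs (x - g n) / 2)). unfold pstep; simpl.
    assert (0 < Rabs (x - g n)) by (apply Rabs_pos_lt; lra).
    repeat split; auto; try lra.
    + rewrite Rminus_diag, Rabs_R0. lra.
    + apply Rmin_glb_lt; lra.
    + apply Rmin_l.
    + apply Rle_lt_trans with (Rabs (x - g n) / 2). apply Rmin_r. lra.
Qed.

Fixpoint st (n : nat) : R * R :=
  match n with
  | O => (x0, 1)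
  | S n => epsilon (inhabits (0, 0)) (pstep (fst (st n)) (snd (st n)) n)
  end.

Lemma st_inv n : P (fst (st n)) /\ 0 < snd (st n) /\ snd (st n) <= (/ 2) ^ n.
Proof.
  induction n as [|n [h1 [h2 h3]]].
  - simpl. repeat split; auto; lra.
  - simpl. destruct (epsilon_spec (inhabits (0, 0)) _ (pstep_ex _ _ n h1 h2)) as [a [b [c [d e]]]].
    repeat split; auto. lra.
Qed.

Lemma st_step n : pstep (fst (st n)) (snd (st n)) n (st (S n)).
Proof.
  destruct (st_inv n) as [h1 [h2 _]]. simpl.
  exact (epsilon_spec (inhabits (0, 0)) _ (pstep_ex _ _ n h1 h2)).
Qed.

Lemma st_close n m : Rabs (fst (st (n + m)) - fst (st n)) <= snd (st n) - snd (st (n + m)).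
Proof.
  induction m.
  - rewrite Nat.add_0_r, Rminus_diag, Rabs_R0. lra.
  - rewrite Nat.add_succ_r.
    destruct (st_step (n + m)) as [_ [a [_ [b _]]]].
    replace (fst (st (S (n + m))) - fst (st n)) with
      ((fst (st (S (n + m))) - fst (st (n + m))) + (fst (st (n + m)) - fst (st n))) by ring.
    eapply Rle_trans. apply Rabs_triang. lra.
Qed.

Lemma st_close' n k : (n <= k)%nat -> Rabs (fst (st k) - fst (st n)) <= snd (st n).
Proof.
  intros h. replace k with (n + (k - n))%nat by lia.
  pose proof (st_close n (k - n)). pose proof (st_inv (n + (k - n))). lra.
Qed.

Lemma small_pow (e : R) : 0 < e -> exists N, (/ 2) ^ N < e.
Proof.
  intros he. destruct (pow_lt_1_zero (/ 2) ltac:(rewrite Rabs_pos_eq; lra) e he) as [N hN].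
  exists N. specialize (hN N (le_n N)). rewrite Rabs_pos_eq in hN; auto.
  apply pow_le. lra.
Qed.

Lemma perfect_avoid : exists x, P x /\ forall n, x <> g n.
Proof.
  assert (hc : Cauchy_crit (fun n => fst (st n))).
  { intros e he. destruct (small_pow (e / 2) ltac:(lra)) as [N hN]. exists N.
    intros n m hn hm. unfold R_dist.
    pose proof (st_inv N) as [_ [_ h3]].
    pose proof (st_close' N n hn). pose proof (st_close' N m hm).
    replace (fst (st n) - fst (st m)) with ((fst (st n) - fst (st N)) + - (fst (st m) - fst (st N))) by ring.
    eapply Rle_lt_trans. apply Rabs_triang. rewrite Rabs_Ropp. lra. }
  destruct (R_complete _ hc) as [L hL].
  assert (hd : forall n, Rabs (L - fst (st n)) <= snd (st n)).
  { intros n. apply Rnot_lt_le. intros hlt.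
    destruct (hL (Rabs (L - fst (st n)) - snd (st n)) ltac:(lra)) as [N hN].
    set (k := Nat.max N n).
    specialize (hN k (Nat.le_max_l N n)). unfold R_dist in hN.
    pose proof (st_close' n k (Nat.le_max_r N n)).
    assert (Rabs (L - fst (st n)) <= Rabs (L - fst (st k)) + Rabs (fst (st k) - fst (st n))).
    { replace (L - fst (st n)) with ((L - fst (st k)) + (fst (st k) - fst (st n))) by ring.
      apply Rabs_triang. }
    rewrite Rabs_minus_sym in hN. lra. }
  exists L. split.
  - destruct hP as [hcl _]. apply hcl. intros e he.
    destruct (small_pow e he) as [N hN]. exists (fst (st N)).
    pose proof (st_inv N) as [h1 [_ h3]]. split; auto.
    specialize (hd N). rewrite Rabs_minus_sym in hd. lra.
  - intros n e. destruct (st_step n) as [_ [_ [_ [_ h]]]].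
    specialize (hd (S n)). rewrite e in hd. rewrite Rabs_minus_sym in hd. lra.
Qed.

End Perf.

Lemma perfect_cov (P C : R -> Prop) : perfect_set P -> (exists x, P x) -> cov C ->
  exists x, P x /\ ~ C x.
Proof.
  intros hP [x0 Px0] [g hg].
  destruct (perfect_avoid P hP x0 Px0 g) as [x [Px hx]].
  exists x. split; auto. intros Cx. destruct (hg x Cx) as [n hn]. apply (hx n). auto.
Qed.

Lemma small_inv (e : R) : 0 < e -> exists m : nat, / INR (S m) < e.
Proof.
  intros he. destruct (archimed (/ e)) as [h1 _].
  assert (0 < / e) by (apply Rinv_0_lt_compat; auto).
  exists (Z.to_nat (up (/ e))).
  rewrite S_INR, INR_IZR_INZ, Z2Nat.id.
  - rewrite <- (Rinv_inv e) at 2. apply Rinv_lt_contravar.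
    + apply Rmult_lt_0_compat; lra.
    + lra.
  - apply le_IZR. lra.
Qed.

Definition dq (n : nat) : R :=
  let (i, m) := Cantor.of_nat n in let (u, v) := Cantor.of_nat i in (INR u - INR v) / INR (S m).

Lemma dq_dense x y : x < y -> exists n, x < dq n < y.
Proof.
  intros hxy. destruct (small_inv (y - x) ltac:(lra)) as [m hm].
  set (K := INR (S m)) in *.
  assert (hK : 0 < K) by (apply lt_0_INR; lia).
  set (z := up (x * K)).
  destruct (archimed (x * K)) as [h1 h2]. fold z in h1, h2.
  set (u := Z.to_nat z). set (v := Z.to_nat (- z)).
  assert (hz : IZR z = INR u - INR v).
  { unfold u, v. rewrite !INR_IZR_INZ, <- minus_IZR. f_equal. lia. }
  exists (Cantor.to_nat (Cantor.to_nat (u, v), m)).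
  unfold dq. rewrite !Cantor.cancel_of_to. rewrite <- hz. fold K.
  assert (hK1 : / K * K = 1) by (field; lra).
  split.
  - apply Rmult_lt_reg_r with K; auto. unfold Rdiv. rewrite Rmult_assoc, hK1. lra.
  - apply Rmult_lt_reg_r with K; auto. unfold Rdiv. rewrite Rmult_assoc, hK1.
    assert (y * K - x * K > 1).
    { replace (y * K - x * K) with ((y - x) * K) by ring.
      apply Rmult_lt_reg_r with (/ K). apply Rinv_0_lt_compat; auto.
      rewrite Rmult_assoc, Rinv_r by lra. lra. }
    lra.
Qed.

Definition enc1 (x : R) (n : nat) : bool := if Rlt_dec (dq n) x then true else false.

Lemma enc1_inj x y : enc1 x = enc1 y -> x = y.
Proof.
  intros e. destruct (Rtotal_order x y) as [h|[h|h]]; auto.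
  - destruct (dq_dense x y h) as [n hn]. assert (enc1 x n = enc1 y n) by (rewrite e; auto).
    unfold enc1 in H. destruct (Rlt_dec (dq n) x); destruct (Rlt_dec (dq n) y); try lra; discriminate.
  - destruct (dq_dense y x h) as [n hn]. assert (enc1 x n = enc1 y n) by (rewrite e; auto).
    unfold enc1 in H. destruct (Rlt_dec (dq n) x); destruct (Rlt_dec (dq n) y); try lra; discriminate.
Qed.

Fixpoint Ps (s : nat -> bool) (n : nat) : R :=
  match n with O => 0 | S n => Ps s n + (if s n then (/ 3) ^ n else 0) end.

Lemma pow3_pos n : 0 < (/ 3) ^ n.
Proof. apply pow_lt. lra. Qed.

Lemma Ps_step s n : Ps s n <= Ps s (S n) <= Ps s n + (/ 3) ^ n.
Proof. simpl. pose proof (pow3_pos n). destruct (s n); lra. Qed.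

Lemma Ps_bound s n : Ps s n <= 3 / 2 - 3 / 2 * (/ 3) ^ n.
Proof.
  induction n.
  - simpl. lra.
  - pose proof (Ps_step s n). simpl pow. lra.
Qed.

Lemma Ps_mono s n m : (n <= m)%nat -> Ps s n <= Ps s m.
Proof.
  intros h. induction h. lra. pose proof (Ps_step s m). lra.
Qed.

Lemma Ps_tail s k m : Ps s (S k + m) <= Ps s (S k) + (/ 3) ^ k / 2 - (/ 3) ^ (k + m) / 2.
Proof.
  induction m.
  - rewrite Nat.add_0_r, Nat.add_0_r. lra.
  - rewrite Nat.add_succ_r. pose proof (Ps_step s (S k + m)).
    replace (S k + m)%nat with (S (k + m)) in * by lia.
    replace (k + S m)%nat with (S (k + m)) by lia.
    simpl pow in *. lra.
Qed.

Lemma Ps_agree s t k : (forall i, (i < k)%nat -> s i = t i) -> Ps s k = Ps t k.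
Proof.
  induction k; intros h; simpl; auto.
  rewrite IHk by (intros; apply h; lia). rewrite (h k) by lia. reflexivity.
Qed.

Lemma Ps_growing s : Un_growing (Ps s).
Proof. intros n. apply Ps_step. Qed.

Lemma Ps_ub s : has_ub (Ps s).
Proof.
  exists (3 / 2). intros x [n ->]. pose proof (Ps_bound s n). pose proof (pow3_pos n). lra.
Qed.

Definition tern (s : nat -> bool) : R := proj1_sig (growing_cv (Ps s) (Ps_growing s) (Ps_ub s)).

Lemma tern_ge s n : Ps s n <= tern s.
Proof.
  unfold tern. destruct (growing_cv (Ps s) (Ps_growing s) (Ps_ub s)) as [l hl]. simpl.
  apply (growing_ineq _ _ (Ps_growing s) hl).
Qed.

Lemma tern_le s B : (forall n, Ps s n <= B) -> tern s <= B.
Proof.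
  intros hB. unfold tern. destruct (growing_cv (Ps s) (Ps_growing s) (Ps_ub s)) as [l hl]. simpl.
  apply Rnot_lt_le. intros hlt. destruct (hl (l - B) ltac:(lra)) as [N hN].
  specialize (hN N (le_n N)). specialize (hB N). unfold R_dist in hN.
  rewrite Rabs_minus_sym in hN. pose proof (Rle_abs (l - Ps s N)). lra.
Qed.

Lemma tern_strict s t k : (forall i, (i < k)%nat -> s i = t i) -> s k = true -> t k = false ->
  tern t < tern s.
Proof.
  intros ha hs ht.
  assert (e1 : Ps s (S k) = Ps s k + (/ 3) ^ k) by (simpl; rewrite hs; auto).
  assert (e2 : Ps t (S k) = Ps t k) by (simpl; rewrite ht; lra).
  assert (e3 := Ps_agree s t k ha).
  pose proof (tern_ge s (S k)).
  assert (tern t <= Ps t k + (/ 3) ^ k / 2).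
  { apply tern_le. intros n. pose proof (pow3_pos k).
    destruct (le_lt_dec n (S k)) as [h|h].
    - pose proof (Ps_mono t n (S k) h). lra.
    - replace n with (S k + (n - S k))%nat by lia.
      pose proof (Ps_tail t k (n - S k)). pose proof (pow3_pos (k + (n - S k))). lra. }
  pose proof (pow3_pos k). lra.
Qed.

Lemma least_diff (s t : nat -> bool) k : s k <> t k ->
  exists k', s k' <> t k' /\ forall i, (i < k')%nat -> s i = t i.
Proof.
  induction k as [k IH] using lt_wf_ind. intros h.
  destruct (classic (forall i, (i < k)%nat -> s i = t i)) as [a|a].
  - exists k. auto.
  - apply not_all_ex_not in a. destruct a as [i hi].
    apply imply_to_and in hi. destruct hi as [hi1 hi2].
    apply (IH i hi1 hi2).
Qed.

Lemma tern_inj s t : tern s = tern t -> s = t.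
Proof.
  intros e. apply functional_extensionality. intros k. apply NNPP. intros hk.
  destruct (least_diff s t k hk) as [k' [h1 h2]].
  destruct (s k') eqn:es; destruct (t k') eqn:et; try congruence.
  - pose proof (tern_strict s t k' h2 es et). lra.
  - assert (h3 : forall i, (i < k')%nat -> t i = s i) by (intros; symmetry; auto).
    pose proof (tern_strict t s k' h3 et es). lra.
Qed.

Definition code := nat -> R.

Definition enc2 (t : code) (m : nat) : bool := let (i, j) := Cantor.of_nat m in enc1 (t i) j.

Lemma enc2_inj t t' : enc2 t = enc2 t' -> t = t'.
Proof.
  intros e. apply functional_extensionality. intros i. apply enc1_inj.
  apply functional_extensionality. intros j.
  assert (h : enc2 t (Cantor.to_nat (i, j)) = enc2 t' (Cantor.to_nat (i, j))) by (rewrite e; auto).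
  unfold enc2 in h. rewrite Cantor.cancel_of_to in h. exact h.
Qed.

Definition cinj (t : code) : R := tern (enc2 t).

Definition dec (r : R) : code := epsilon (inhabits (fun _ => 0)) (fun t => cinj t = r).

Lemma dec_surj t : exists r, dec r = t.
Proof.
  exists (cinj t). unfold dec.
  assert (h : exists t', cinj t' = cinj t) by (exists t; auto).
  pose proof (epsilon_spec (inhabits (fun _ : nat => 0)) _ h) as h'.
  apply enc2_inj, tern_inj. exact h'.
Qed.

Definition pr (k n : nat) : nat := Cantor.to_nat (k, n).
Definition ta (t : code) k n := t (pr 0 (pr k n)).
Definition tb (t : code) k n := t (pr 1 (pr k n)).
Definition tp (t : code) n := t (pr 2 n).
Definition tq (t : code) n := t (pr 3 n).

Definition Nvalid (t : code) : Prop := forall k, (forall n, ta t k n <= tb t k n) /\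
  forall m, sum_f_R0 (fun n => tb t k n - ta t k n) m <= / INR (S k).
Definition Nset (t : code) (x : R) : Prop := Nvalid t /\ forall k, exists n, ta t k n < x < tb t k n.
Definition Pset (t : code) (x : R) : Prop := forall n, ~ (tp t n < x < tq t n).

Definition mk (a b : nat -> nat -> R) (p q : nat -> R) : code := fun m =>
  let (i, j) := Cantor.of_nat m in
  match i with
  | O => let (k, n) := Cantor.of_nat j in a k n
  | S O => let (k, n) := Cantor.of_nat j in b k n
  | S (S O) => p j
  | _ => q j
  end.

Lemma mk_a a b p q k n : ta (mk a b p q) k n = a k n.
Proof. unfold ta, mk, pr. rewrite !Cantor.cancel_of_to. reflexivity. Qed.
Lemma mk_b a b p q k n : tb (mk a b p q) k n = b k n.
Proof. unfold tb, mk, pr. rewrite !Cantor.cancel_of_to. reflexivity. Qed.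
Lemma mk_p a b p q n : tp (mk a b p q) n = p n.
Proof. unfold tp, mk, pr. rewrite !Cantor.cancel_of_to. reflexivity. Qed.
Lemma mk_q a b p q n : tq (mk a b p q) n = q n.
Proof. unfold tq, mk, pr. rewrite !Cantor.cancel_of_to. reflexivity. Qed.

Lemma null_sub (N M : R -> Prop) : (forall x, M x -> N x) -> lebesgue_null N -> lebesgue_null M.
Proof.
  intros h hN eps he. destruct (hN eps he) as [a [b [h1 [h2 h3]]]].
  exists a, b. split; [|split]; auto.
Qed.

Lemma Nset_null t : lebesgue_null (Nset t).
Proof.
  destruct (classic (Nvalid t)) as [hv|hv].
  - intros eps he. destruct (small_inv eps he) as [m hm].
    exists (ta t m), (tb t m). destruct (hv m) as [h1 h2]. split; [|split]; auto.
    + intros x [_ hx]. apply hx.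
    + intros k. specialize (h2 k). lra.
  - apply null_sub with (N := fun _ => False).
    + intros x [h _]. auto.
    + apply cov_null. exists (fun _ => 0). intros x [].
Qed.

Lemma Nset_cover (N : R -> Prop) : lebesgue_null N -> exists t, forall x, N x -> Nset t x.
Proof.
  intros hN.
  set (spec := fun k (ab : (nat -> R) * (nat -> R)) =>
    (forall n, fst ab n <= snd ab n) /\ (forall x, N x -> exists n, fst ab n < x < snd ab n) /\
    (forall m, sum_f_R0 (fun n => snd ab n - fst ab n) m <= / INR (S k))).
  assert (hex : forall k, exists ab, spec k ab).
  { intros k. assert (0 < / INR (S k)) by (apply Rinv_0_lt_compat, lt_0_INR; lia).
    destruct (hN _ H) as [a [b h]]. exists (a, b). exact h. }
  set (ab := fun k => epsilon (inhabits ((fun _ : nat => 0), (fun _ : nat => 0))) (spec k)).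
  assert (hab : forall k, spec k (ab k)) by (intros k; apply epsilon_spec, hex).
  exists (mk (fun k n => fst (ab k) n) (fun k n => snd (ab k) n) (fun _ => 0) (fun _ => 0)).
  intros x Nx. split.
  - intros k. destruct (hab k) as [h1 [h2 h3]]. split.
    + intros n. rewrite mk_a, mk_b. auto.
    + intros m. specialize (h3 m). etransitivity; [|exact h3].
      right. apply sum_eq. intros. rewrite mk_a, mk_b. reflexivity.
  - intros k. destruct (hab k) as [h1 [h2 h3]]. destruct (h2 x Nx) as [n hn].
    exists n. rewrite mk_a, mk_b. exact hn.
Qed.

Lemma Pset_cover (P : R -> Prop) : closed_set P -> exists t, forall x, P x <-> Pset t x.
Proof.
  intros hP.
  set (good := fun n => let (i, j) := Cantor.of_nat n in forall z, dq i < z < dq j -> ~ P z).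
  set (p := fun n => if excluded_middle_informative (good n) then dq (fst (Cantor.of_nat n)) else 0).
  set (q := fun n => if excluded_middle_informative (good n) then dq (snd (Cantor.of_nat n)) else 0).
  exists (mk (fun _ _ => 0) (fun _ _ => 0) p q). intros x. split.
  - intros Px n. rewrite mk_p, mk_q. unfold p, q.
    destruct (excluded_middle_informative (good n)) as [g|g]; [|lra].
    unfold good in g. destruct (Cantor.of_nat n) as [i j]. simpl. intros hz. exact (g x hz Px).
  - intros hx. apply NNPP. intros nP.
    assert (he : exists e, 0 < e /\ forall y, P y -> e <= Rabs (y - x)).
    { apply NNPP. intros hne. apply nP. apply hP. intros e he.
      apply NNPP. intros hy. apply hne. exists e. split; auto.
      intros y Py. apply Rnot_lt_le. intros hlt. apply hy. exists y. auto. }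
    destruct he as [e [he hy]].
    destruct (dq_dense (x - e) x ltac:(lra)) as [i hi].
    destruct (dq_dense x (x + e) ltac:(lra)) as [j hj].
    assert (g : good (Cantor.to_nat (i, j))).
    { unfold good. rewrite Cantor.cancel_of_to. intros z hz Pz. specialize (hy z Pz).
      unfold Rabs in hy. destruct (Rcase_abs (z - x)); lra. }
    apply (hx (Cantor.to_nat (i, j))). rewrite mk_p, mk_q. unfold p, q.
    destruct (excluded_middle_informative (good (Cantor.to_nat (i, j)))) as [_|ng]; [|contradiction].
    rewrite Cantor.cancel_of_to. simpl. lra.
Qed.

Lemma omega1 : CH -> exists lt : R -> R -> Prop, well_founded lt /\
  (forall x y, x <> y -> lt x y \/ lt y x) /\ (forall x y z, lt x y -> lt y z -> lt x z) /\
  forall x, cov (fun y => lt y x).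
Proof.
  intros hCH.
  destruct MC.wo_R as [lt0 [wf0 [tot0 tr0]]].
  destruct (classic (forall x, countable (fun y => lt0 y x))) as [hc|hc].
  - exists lt0. split; [exact wf0|split; [exact tot0|split; [exact tr0|]]]. intros x. apply countable_cov, hc.
  - apply not_all_ex_not in hc. destruct hc as [x1 hx1].
    assert (hmin : forall x, ~ countable (fun y => lt0 y x) ->
       exists x0, ~ countable (fun y => lt0 y x0) /\ forall y, lt0 y x0 -> countable (fun z => lt0 z y)).
    { intros x. induction x as [x IH] using (well_founded_ind wf0). intros hx.
      destruct (classic (forall y, lt0 y x -> countable (fun z => lt0 z y))) as [h|h].
      - exists x. auto.
      - apply not_all_ex_not in h. destruct h as [y hy]. apply imply_to_and in hy.
        destruct hy as [hy1 hy2]. apply (IH y hy1 hy2). }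
    destruct (hmin x1 hx1) as [x0 [hx0 hsm]].
    destruct (hCH (fun y => lt0 y x0)) as [hcnt|[g [hg1 [hg2 hg3]]]]; [contradiction|].
    exists (fun r s => lt0 (g r) (g s)). split; [|split; [|split]].
    + apply wf_inverse_image. exact wf0.
    + intros x y ne. apply tot0. intros e. apply ne. apply hg2. exact e.
    + intros x y z h1 h2. eapply tr0; eauto.
    + intros s. apply countable_cov.
      destruct (hsm (g s) (hg1 s)) as [f hf].
      exists (fun r => f (g r)). intros x y hx hy e. apply hg2. apply hf; auto.
Qed.

Lemma perfect_ext (P Q : R -> Prop) : (forall x, P x <-> Q x) -> perfect_set P -> perfect_set Q.
Proof.
  intros h [hc hn]. split.
  - intros x hx. apply h, hc. intros e he. destruct (hx e he) as [y [Qy hy]].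
    exists y. split; auto. apply h; auto.
  - intros x Qx e he. destruct (hn x (proj2 (h x) Qx) e he) as [y [Py hy]].
    exists y. split; auto. apply h; auto.
Qed.

Lemma perfect_R : perfect_set (fun _ => True).
Proof.
  split.
  - intros x _. auto.
  - intros x _ e he. exists (x + e / 2). split; auto. split. lra.
    replace (x + e / 2 - x) with (e / 2) by ring. rewrite Rabs_pos_eq; lra.
Qed.

Section Main.
Variable lt : R -> R -> Prop.
Hypothesis lt_wf : well_founded lt.
Hypothesis lt_tot : forall x y, x <> y -> lt x y \/ lt y x.
Hypothesis lt_tr : forall x y z, lt x y -> lt y z -> lt x z.
Hypothesis lt_cov : forall x, cov (fun y => lt y x).

Definition trip := (R * R * R)%type.
Definition X3 (p : trip) : R := fst (fst p).
Definition Y3 (p : trip) : R := snd (fst p).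
Definition Q3 (p : trip) : R := snd p.

Definition PN (r : R) : Prop := perfect_set (Pset (dec r)) /\ exists w, Pset (dec r) w.
Definition Peff (r z : R) : Prop := PN r -> Pset (dec r) z.
Definition prevS (r : R) (k : R -> trip) (a : R) : Prop :=
  exists s, lt s r /\ (a = X3 (k s) \/ a = Y3 (k s)).
Definition prevQ (r : R) (k : R -> trip) (a : R) : Prop :=
  exists s, lt s r /\ a = Q3 (k s).

Definition Good (r : R) (k : R -> trip) (v : trip) : Prop :=
  (forall s, lt s r \/ s = r -> ~ Nset (dec s) (X3 v) /\ ~ Nset (dec s) (Y3 v)) /\
  Peff r (Q3 v) /\ Peff r (X3 v + Y3 v) /\
  (forall a b, (prevS r k a \/ a = X3 v \/ a = Y3 v) -> (prevS r k b \/ b = X3 v \/ b = Y3 v) ->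
     Q3 v <> a + b) /\
  (forall q', prevQ r k q' -> forall a, (prevS r k a \/ a = X3 v \/ a = Y3 v) ->
     q' <> X3 v + a /\ q' <> Y3 v + a).

Lemma Peff_perfect r : perfect_set (Peff r) /\ exists w, Peff r w.
Proof.
  destruct (classic (PN r)) as [h|h].
  - split.
    + apply perfect_ext with (P := Pset (dec r)). { intros x. unfold Peff. split; auto. }
      apply h.
    + destruct h as [_ [w hw]]. exists w. intros _. auto.
  - split.
    + apply perfect_ext with (P := fun _ => True). { intros x. unfold Peff. split; tauto. }
      apply perfect_R.
    + exists 0. intros h'. contradiction.
Qed.

Lemma Good_ex r k : exists v, Good r k v.
Proof.
  assert (cS : cov (prevS r k)).
  { apply cov_sub with (B := fun a => exists s, lt s r /\ (fun s a => a = X3 (k s) \/ a = Y3 (k s)) s a).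
    { intros a h. exact h. }
    apply cov_bigunion; auto. intros s _. apply cov_union; apply cov_1. }
  assert (cQ : cov (prevQ r k)).
  { apply cov_sub with (B := fun a => exists s, lt s r /\ (fun s a => a = Q3 (k s)) s a).
    { intros a h. exact h. }
    apply cov_bigunion; auto. intros s _. apply cov_1. }
  destruct (Peff_perfect r) as [hperf hne].
  destruct (perfect_cov (Peff r) (fun z => exists a b, prevS r k a /\ prevS r k b /\ z = a + b)
     hperf hne (cov_sum _ _ cS cS)) as [q [Pq nq]].
  destruct (perfect_cov (Peff r) (fun z => prevQ r k z \/ z = q)
     hperf hne (cov_union _ _ cQ (cov_1 q))) as [p [Pp np]].
  set (I := fun s => lt s r \/ s = r).
  assert (cI : cov I) by (apply cov_union; [apply lt_cov | apply cov_1]).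
  set (NN := fun z => exists s, I s /\ Nset (dec s) z).
  set (B2 := fun z => exists s, I s /\ (fun s z => Nset (dec s) (p - z)) s z).
  set (E := fun z => exists q', (prevQ r k q' \/ q' = q) /\
     (fun q' z => (exists a, prevS r k a /\ (z = q' - a \/ z = p + a - q')) \/ z = q' / 2 \/ z = p - q' / 2) q' z).
  assert (sNN : small NN).
  { apply small_bigunion; auto. intros s _. apply MC.small_null, Nset_null. }
  assert (sB2 : small B2).
  { apply small_bigunion; auto. intros s _. apply MC.small_null, null_reflect, Nset_null. }
  assert (sE : small E).
  { apply cov_small. apply cov_bigunion. { apply cov_union; [exact cQ|apply cov_1]. }
    intros q' _.
    apply cov_sub with (B := fun z => ((exists a, prevS r k a /\ z = q' - a) \/
       (exists a, prevS r k a /\ z = p + a - q')) \/ (z = q' / 2 \/ z = p - q' / 2)).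
    { intros z [[a [ha [h|h]]]|[h|h]]; [left; left|left; right|right; left|right; right]; eauto. }
    apply cov_union; apply cov_union.
    - apply cov_image with (h := fun a => q' - a). exact cS.
    - apply cov_image with (h := fun a => p + a - q'). exact cS.
    - apply cov_1.
    - apply cov_1. }
  destruct (MC.small_not_all _ (MC.small_U _ _ (MC.small_U _ _ sNN sB2) sE)) as [x hx].
  assert (hNN : ~ NN x) by tauto.
  assert (hB2 : ~ B2 x) by tauto.
  assert (hE : ~ E x) by tauto.
  clear hx.
  exists ((x, p - x), q). unfold Good, X3, Y3, Q3; simpl.
  assert (ep : x + (p - x) = p) by ring.
  assert (hE1 : forall q', prevQ r k q' \/ q' = q -> forall a, prevS r k a -> x <> q' - a /\ x <> p + a - q').
  { intros q' hq' a ha. split; intros e; apply hE; exists q'; split; auto; left; exists a; auto. }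
  assert (hE2 : forall q', prevQ r k q' \/ q' = q -> x <> q' / 2 /\ x <> p - q' / 2).
  { intros q' hq'. split; intros e; apply hE; exists q'; split; auto; right; auto. }
  split; [|split; [|split; [|split]]].
  - intros s hs. split.
    + intros h. apply hNN. exists s. split; auto.
    + intros hh. apply hB2. exists s. split. exact hs. simpl. replace (p - (p - x)) with x by ring. exact hh.
  - exact Pq.
  - rewrite ep. exact Pp.
  - assert (hq1 : forall a, prevS r k a -> q <> x + a /\ q <> (p - x) + a).
    { intros a ha. destruct (hE1 q (or_intror eq_refl) a ha) as [h1 h2]. split; intros e.
      - apply h1. lra.
      - apply h2. lra. }
    destruct (hE2 q (or_intror eq_refl)) as [h3 h4].
    assert (hpq : p <> q) by (intros e; apply np; right; auto).
    intros a b ha hb.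
    destruct ha as [ha|[ha|ha]]; destruct hb as [hb|[hb|hb]]; subst; intros e.
    + apply nq. exists a, b. auto.
    + apply (proj1 (hq1 a ha)). lra.
    + apply (proj2 (hq1 a ha)). lra.
    + apply (proj1 (hq1 b hb)). lra.
    + apply h3. lra.
    + apply hpq. lra.
    + apply (proj2 (hq1 b hb)). lra.
    + apply hpq. lra.
    + apply h4. lra.
  - intros q' hq' a ha.
    destruct (hE2 q' (or_introl hq')) as [h3 h4].
    assert (hpq : p <> q') by (intros e; apply np; left; subst; auto).
    destruct ha as [ha|[ha|ha]].
    + destruct (hE1 q' (or_introl hq') a ha) as [h1 h2]. split; intros e.
      * apply h1. lra.
      * apply h2. lra.
    + subst a. split; intros e.
      * apply h3. lra.
      * apply hpq. lra.
    + subst a. split; intros e.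
      * apply hpq. lra.
      * apply h4. lra.
Qed.

End Main.

Section Main2.
Variable lt : R -> R -> Prop.
Hypothesis lt_wf : well_founded lt.
Hypothesis lt_tot : forall x y, x <> y -> lt x y \/ lt y x.
Hypothesis lt_tr : forall x y z, lt x y -> lt y z -> lt x z.
Hypothesis lt_cov : forall x, cov (fun y => lt y x).

Definition ext (r : R) (h : forall s, lt s r -> trip) (s : R) : trip :=
  match excluded_middle_informative (lt s r) with
  | left H => h s H
  | right _ => ((0, 0), 0)
  end.

Definition Fst (r : R) (h : forall s, lt s r -> trip) : trip :=
  epsilon (inhabits ((0, 0), 0)) (Good lt r (ext r h)).

Definition sol : R -> trip := Fix lt_wf (fun _ => trip) Fst.

Lemma Fst_ext : forall (x : R) (f g : forall y : R, lt y x -> trip),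
  (forall (y : R) (p : lt y x), f y p = g y p) -> Fst x f = Fst x g.
Proof.
  intros x f g hfg. unfold Fst.
  replace (ext x f) with (ext x g); auto.
  apply functional_extensionality. intros s. unfold ext.
  destruct (excluded_middle_informative (lt s x)); auto.
Qed.

Lemma sol_eq r : sol r = Fst r (fun s _ => sol s).
Proof. unfold sol. exact (@Fix_eq R lt lt_wf (fun _ => trip) Fst Fst_ext r). Qed.

Lemma prevS_ext r k k' : (forall s, lt s r -> k s = k' s) -> prevS lt r k = prevS lt r k'.
Proof.
  intros h. apply functional_extensionality. intros a. apply propositional_extensionality.
  unfold prevS. split; intros [s [hs e]]; exists s; split; auto; rewrite ?(h s hs) in *; auto.
Qed.

Lemma prevQ_ext r k k' : (forall s, lt s r -> k s = k' s) -> prevQ lt r k = prevQ lt r k'.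
Proof.
  intros h. apply functional_extensionality. intros a. apply propositional_extensionality.
  unfold prevQ. split; intros [s [hs e]]; exists s; split; auto; rewrite ?(h s hs) in *; auto.
Qed.

Lemma sol_good r : Good lt r sol (sol r).
Proof.
  assert (hk : forall s, lt s r -> ext r (fun s _ => sol s) s = sol s).
  { intros s hs. unfold ext. destruct (excluded_middle_informative (lt s r)); auto. contradiction. }
  pose proof (epsilon_spec (inhabits ((0, 0), 0)) _ (Good_ex lt lt_cov r (ext r (fun s _ => sol s)))) as h.
  fold (Fst r (fun s _ => sol s)) in h. rewrite <- sol_eq in h.
  unfold Good in *. rewrite <- (prevS_ext r _ _ hk), <- (prevQ_ext r _ _ hk). exact h.
Qed.

Lemma cov_prevS r : cov (prevS lt r sol).
Proof.
  apply cov_sub with (B := fun a => exists s, lt s r /\ (fun s a => a = X3 (sol s) \/ a = Y3 (sol s)) s a).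
  { intros a h. exact h. }
  apply cov_bigunion; auto. intros s _. apply cov_union; apply cov_1.
Qed.

Definition Sset (z : R) : Prop := exists r, z = X3 (sol r) \/ z = Y3 (sol r).

Lemma S_null_count (N : R -> Prop) : lebesgue_null N -> countable (fun x => Sset x /\ N x).
Proof.
  intros hN. destruct (Nset_cover N hN) as [t ht]. destruct (dec_surj t) as [r0 hr0].
  apply cov_countable. apply cov_sub with (B := prevS lt r0 sol); [|apply cov_prevS].
  intros z [[r hz] Nz]. specialize (ht z Nz). rewrite <- hr0 in ht.
  destruct (sol_good r) as [g1 _].
  destruct (classic (r = r0)) as [e|ne].
  - subst r0. destruct (g1 r (or_intror eq_refl)) as [n1 n2].
    destruct hz as [->| ->]; contradiction.
  - destruct (lt_tot r r0 ne) as [l|l].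
    + exists r. auto.
    + destruct (g1 r0 (or_introl l)) as [n1 n2].
      destruct hz as [->| ->]; contradiction.
Qed.

Lemma S_uncount : ~ countable Sset.
Proof.
  intros hc. destruct (Nset_cover Sset (cov_null _ (countable_cov _ hc))) as [t ht].
  destruct (dec_surj t) as [r0 hr0].
  assert (h : Nset (dec r0) (X3 (sol r0))).
  { rewrite hr0. apply ht. exists r0. auto. }
  destruct (sol_good r0) as [g1 _]. destruct (g1 r0 (or_intror eq_refl)) as [n1 _]. auto.
Qed.

Lemma max2 r1 r2 : exists m, (m = r1 \/ m = r2) /\ (lt r1 m \/ r1 = m) /\ (lt r2 m \/ r2 = m).
Proof.
  destruct (classic (r1 = r2)) as [e|ne].
  - subst. exists r2. auto.
  - destruct (lt_tot r1 r2 ne) as [l|l].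
    + exists r2. auto.
    + exists r1. auto.
Qed.

Lemma stage_in r1 m a : (lt r1 m \/ r1 = m) -> (a = X3 (sol r1) \/ a = Y3 (sol r1)) ->
  prevS lt m sol a \/ a = X3 (sol m) \/ a = Y3 (sol m).
Proof.
  intros [l| <-] ha.
  - left. exists r1. auto.
  - right. exact ha.
Qed.

Lemma q_not_sum r : ~ sumset Sset (Q3 (sol r)).
Proof.
  intros [a [b [[r1 ha] [[r2 hb] e]]]].
  destruct (max2 r1 r2) as [m [hm [h1 h2]]].
  destruct (classic (lt r m)) as [lrm|nlrm].
  - destruct (sol_good m) as [_ [_ [_ [_ g5]]]].
    assert (hq : prevQ lt m sol (Q3 (sol r))) by (exists r; auto).
    destruct hm as [<-|<-].
    + destruct (g5 _ hq b (stage_in r2 m b h2 hb)) as [n1 n2].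
      destruct ha as [->| ->]; contradiction.
    + destruct (g5 _ hq a (stage_in r1 m a h1 ha)) as [n1 n2].
      destruct hb as [->| ->]; rewrite Rplus_comm in e; contradiction.
  - assert (hmr : lt m r \/ m = r).
    { destruct (classic (m = r)) as [em|nem]; auto. destruct (lt_tot m r nem); auto. contradiction. }
    assert (k1 : lt r1 r \/ r1 = r).
    { destruct h1 as [l1| ->]; auto. destruct hmr as [l2| <-]; auto. left. eapply lt_tr; eauto. }
    assert (k2 : lt r2 r \/ r2 = r).
    { destruct h2 as [l1| ->]; auto. destruct hmr as [l2| <-]; auto. left. eapply lt_tr; eauto. }
    destruct (sol_good r) as [_ [_ [_ [g4 _]]]].
    apply (g4 a b (stage_in r1 r a k1 ha) (stage_in r2 r b k2 hb)). exact e.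
Qed.

Lemma S_bernstein : bernstein_set (sumset Sset).
Proof.
  intros P hP hne.
  destruct (Pset_cover P (proj1 hP)) as [t ht]. destruct (dec_surj t) as [r hr].
  assert (hPN : PN r).
  { unfold PN. rewrite hr. split.
    - apply perfect_ext with (P := P); auto.
    - destruct hne as [w hw]. exists w. apply ht. auto. }
  destruct (sol_good r) as [_ [g2 [g3 _]]].
  split.
  - exists (X3 (sol r) + Y3 (sol r)). split.
    + apply ht. rewrite <- hr. apply g3. exact hPN.
    + exists (X3 (sol r)), (Y3 (sol r)). split; [exists r; auto|split; [exists r; auto|auto]].
  - exists (Q3 (sol r)). split.
    + apply ht. rewrite <- hr. apply g2. exact hPN.
    + apply q_not_sum.
Qed.
End Main2.

Theorem mainTheorem18 :
  CH -> exists S : R -> Prop, sierpinski_set S /\ bernstein_set (sumset S).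
Proof.
  intros hCH. destruct (omega1 hCH) as [lt [wf [tot [tr cv]]]].
  exists (Sset lt wf). split; [split|].
  - destruct (hCH (Sset lt wf)) as [h|h]; [exfalso; exact (S_uncount lt wf cv h) | exact h].
  - intros N hN. exact (S_null_count lt wf tot cv N hN).
  - exact (S_bernstein lt wf tot tr cv).
Qed.
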